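(* (Operational Friendliness no-go theorem.) If a superobserver can perform arbitrary quantum operations on an observer and its environment, then no physical theory can satisfy Operational Friendliness. Precisely: in the Operational Friendliness scenario described in the context, there is a choice of qubit preparations $P_0,P_1$ and measurements $C$, $D$, $B$ for which the quantum-mechanical empirical distributions $\wp(c,d\mid x=0,y=0)$, $\wp(c,b\mid x=0,y=1)$, $\wp(a,d\mid x=1,y=0)$, $\wp(a,b\mid x=1,y=1)$ cannot be reproduced by any family of distributions $p(a,b,c,d\mid x,y)$ satisfying both Absoluteness of Observed Events and Operational Agency.
   Context: Operational Friendliness scenario: Alice prepares a qubit $S$ in a state $P_a$, where $a\in\{0,1\}$ takes each value with probability $1/2$. She sends $S$ to her friend Charlie, who performs a two-outcome measurement $C$ on $S$ with outcome $c\in\{0,1\}$, modelled (from outside Charlie's lab) by a unitary $U_C$ on $S$ together with Charlie's lab. Alice then has a binary choice $x\in\{0,1\}$: if $x=0$ she takes Charlie's outcome as hers; if $x=1$ she acts as a superobserver and applies $U_C^\dagger$, undoing Charlie's measurement and erasing the record of $c$. The system $S$ is then passed to Debbie, who performs a two-outcome measurement $D$ with outcome $d\in\{0,1\}$, modelled by a unitary $U_D$. Bob has a binary choice $y\in\{0,1\}$: if $y=0$ he takes Debbie's outcome as his outcome ($b=d$); if $y=1$ he applies $U_D^\dagger$, erasing $d$, and then performs a two-outcome measurement $B$ on $S$ with outcome $b\in\{0,1\}$. The empirically accessible (single-agent verifiable) distributions are $\wp(c,d\mid x=0,y=0)$, $\wp(c,b\mid x=0,y=1)$, $\wp(a,d\mid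 x=1,y=0)$, $\wp(a,b\mid x=1,y=1)$, computed by quantum theory (Born rule). Here $\wp$ denotes empirical distributions, $p$ theoretical ones. Absoluteness of Observed Events (AOE): every observed event is an absolute single event, not relative to anything or anyone; in this scenario it implies the existence, for each $x,y$, of joint distributions $p(a,b,c,d\mid x,y)$ over all observed outcomes (including erased ones) whose marginals reproduce the empirical distributions above. Operational Agency: any operational equivalence that would be verified by a hypothetical agent with access to all the relevant variables still holds even if it cannot be verified by a single agent. In this scenario it implies, e.g., $p(c\mid x,y)=p(c)$, $p(c,d\mid x,y)=p(c,d\mid x)$, $p(a,d\mid x,y)=p(a,d\mid x)$, $p(d\mid c,x,y)=p(d\mid c,y)$ and $p(b\mid c,x,y)=p(b\mid c,y)$. Operational Friendliness is the conjunction of AOE and Operational Agency. *)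

(* Defs.v *)
From HB Require Import structures.
From mathcomp Require Import all_boot all_order all_algebra.
From mathcomp Require Import algC.
Set Implicit Arguments. Unset Strict Implicit. Unset Printing Implicit Defensive.
Import Order.TTheory GRing.Theory Num.Theory.
Local Open Scope ring_scope.

Notation qmat := 'M[algC]_2.

Definition adjmx (A : qmat) : qmat := (map_mx Num.conj A)^T.

Definition hermitian (A : qmat) : Prop := adjmx A = A.

(** Positive semidefinite: <v|A|v> >= 0 for every vector v
    (in algC, [0 <= z] means z is real and nonnegative). *)
Definition psd (A : qmat) : Prop :=
  hermitian A /\
  forall v : 'cV[algC]_2, 0 <= ((map_mx Num.conj v)^T *m A *m v) 0 0.

Definition density (P : qmat) : Prop := psd P /\ \tr P = 1.

(** A two-outcome projective measurement {M 0, M 1} (outcome 0 = false). *)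
Definition projmeas (M : bool -> qmat) : Prop :=
  (forall k, hermitian (M k) /\ M k *m M k = M k) /\ M false + M true = 1%:M.

(** Empirical (Born-rule) distributions of the scenario, with a uniform
    over {0,1} (prob. 1/2), Charlie's / Debbie's measurements modelled by
    the ideal (Lueders) unitary measurement interaction, so that undoing a
    measurement restores the pre-measurement state of S. *)
Definition emp00 (P C D : bool -> qmat) (c d : bool) : algC :=
  \sum_(a : bool) 2^-1 * \tr (D d *m (C c *m P a *m C c)).
(* x = 0, y = 1 : wp(c,b)  (Debbie's measurement undone by Bob) *)
Definition emp01 (P C B : bool -> qmat) (c b : bool) : algC :=
  \sum_(a : bool) 2^-1 * \tr (B b *m (C c *m P a *m C c)).
(* x = 1, y = 0 : wp(a,d)  (Charlie's measurement undone by Alice) *)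
Definition emp10 (P D : bool -> qmat) (a d : bool) : algC :=
  2^-1 * \tr (D d *m P a).
Definition emp11 (P B : bool -> qmat) (a b : bool) : algC :=
  2^-1 * \tr (B b *m P a).

(** A OFfamily of theoretical distributions p(a,b,c,d | x,y):
    [p x y a b c d]. *)
Definition OFfamily := bool -> bool -> bool -> bool -> bool -> bool -> algC.

Definition is_family (p : OFfamily) : Prop :=
  forall x y, (forall a b c d, 0 <= p x y a b c d) /\
    \sum_(a : bool) \sum_(b : bool) \sum_(c : bool) \sum_(d : bool)
       p x y a b c d = 1.

Definition pC (p : OFfamily) x y c : algC :=
  \sum_(a : bool) \sum_(b : bool) \sum_(d : bool) p x y a b c d.
Definition pCD (p : OFfamily) x y c d : algC :=
  \sum_(a : bool) \sum_(b : bool) p x y a b c d.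
Definition pCB (p : OFfamily) x y c b : algC :=
  \sum_(a : bool) \sum_(d : bool) p x y a b c d.
Definition pAD (p : OFfamily) x y a d : algC :=
  \sum_(b : bool) \sum_(c : bool) p x y a b c d.
Definition pAB (p : OFfamily) x y a b : algC :=
  \sum_(c : bool) \sum_(d : bool) p x y a b c d.

(** Conditionals p(d|c,x,y), p(b|c,x,y) (only meaningful when p(c|x,y) <> 0). *)
Definition condD (p : OFfamily) x y c d : algC := pCD p x y c d / pC p x y c.
Definition condB (p : OFfamily) x y c b : algC := pCB p x y c b / pC p x y c.

Definition AOE (P C D B : bool -> qmat) (p : OFfamily) : Prop :=
  [/\ forall c d, pCD p false false c d = emp00 P C D c d,
      forall c b, pCB p false true c b = emp01 P C B c b,
      forall a d, pAD p true false a d = emp10 P D a d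
    & forall a b, pAB p true true a b = emp11 P B a b].

Definition OpAgency (p : OFfamily) : Prop :=
  [/\ forall x y x' y' c, pC p x y c = pC p x' y' c,
      forall x y y' c d, pCD p x y c d = pCD p x y' c d,
      forall x y y' a d, pAD p x y a d = pAD p x y' a d,
      forall x x' y c d, pC p x y c != 0 -> pC p x' y c != 0 ->
                         condD p x y c d = condD p x' y c d
    & forall x x' y c b, pC p x y c != 0 -> pC p x' y c != 0 ->
                         condB p x y c b = condB p x' y c b].

Definition OpFriendliness (P C D B : bool -> qmat) (p : OFfamily) : Prop :=
  is_family p /\ AOE P C D B p /\ OpAgency p.

(* Main.v *)
Require Import Defs.
From HB Require Import structures.
From mathcomp Require Import all_boot all_order all_algebra.
From mathcomp Require Import algC.
From mathcomp Require Import ring.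
Import Order.TTheory GRing.Theory Num.Theory.
Local Open Scope ring_scope.

Definition mk2 (a b c d : algC) : 'M[algC]_2 :=
  \matrix_(i < 2, j < 2) if (i == 0 :> nat) then (if (j == 0 :> nat) then a else b)
                         else (if (j == 0 :> nat) then c else d).

Lemma ord2 (i : 'I_2) : i = ord0 \/ i = lift ord0 ord0.
Proof. case: i => [[|[|n]]] Hi; [left|right|]; try exact/val_inj. by []. Qed.

Lemma mk2_mul a b c d e f g h :
  mk2 a b c d *m mk2 e f g h = mk2 (a*e+b*g) (a*f+b*h) (c*e+d*g) (c*f+d*h).
Proof.
apply/matrixP=> i j; rewrite !mxE !big_ord_recl big_ord0 !mxE /=.
by case: (ord2 i) => ->; case: (ord2 j) => -> /=; ring.
Qed.

Lemma mk2_add a b c d e f g h :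
  mk2 a b c d + mk2 e f g h = mk2 (a+e) (b+f) (c+g) (d+h).
Proof.
apply/matrixP=> i j; rewrite !mxE /=.
by case: (ord2 i) => ->; case: (ord2 j) => -> /=.
Qed.

Lemma mk2_one : 1%:M = mk2 1 0 0 1 :> 'M[algC]_2.
Proof.
apply/matrixP=> i j; rewrite !mxE /=.
by case: (ord2 i) => ->; case: (ord2 j) => -> /=.
Qed.

Lemma mk2_tr a b c d : \tr (mk2 a b c d) = a + d.
Proof. by rewrite /mxtrace !big_ord_recl big_ord0 !mxE /= addr0. Qed.

Lemma mk2_adj a b c d : adjmx (mk2 a b c d) = mk2 a^* c^* b^* d^*.
Proof.
apply/matrixP=> i j; rewrite !mxE /=.
by case: (ord2 i) => ->; case: (ord2 j) => -> /=.
Qed.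

Lemma mk2_form a b c d (v : 'cV[algC]_2) :
  ((map_mx Num.conj v)^T *m mk2 a b c d *m v) 0 0 =
  let v0 := v ord0 0 in let v1 := v (lift ord0 ord0) 0 in
  v0^* * (a * v0 + b * v1) + v1^* * (c * v0 + d * v1).
Proof.
rewrite /= !mxE !big_ord_recl !big_ord0 !mxE !big_ord_recl !big_ord0 !mxE /=.
ring.
Qed.

Definition h : algC := 2^-1.

Lemma h_conj : h^* = h.
Proof. by rewrite /h conj_Creal // rpredV ?rpred_nat. Qed.

Lemma h_ge0 : 0 <= h.
Proof. by rewrite /h invr_ge0 ler0n. Qed.

Lemma hh : h + h = 1.
Proof. rewrite /h; by field. Qed.

Definition Pm (a : bool) := mk2 h h h h.
Definition Cm (c : bool) := if c then mk2 0 0 0 1 else mk2 1 0 0 0.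
Definition Dm (d : bool) := if d then mk2 h (-h) (-h) h else mk2 h h h h.

Lemma hermit_mk2 (a b c d : algC) : a^* = a -> b^* = c -> c^* = b -> d^* = d ->
  Defs.hermitian (mk2 a b c d).
Proof. by move=> Ha Hb Hc Hd; rewrite /Defs.hermitian mk2_adj Ha Hb Hc Hd. Qed.

Lemma hh2 : h * h + h * h = h.
Proof. rewrite /h; by field. Qed.

Lemma projC : projmeas Cm.
Proof.
split; last by rewrite /Cm mk2_add mk2_one !(addr0, add0r).
case=> /=; (split; [apply: hermit_mk2; by rewrite ?conjC0 ?conjC1 |
  rewrite mk2_mul; congr mk2; ring]).
Qed.

Lemma projD : projmeas Dm.
Proof.
have Nh : (- h)^* = - h by rewrite conj_Creal // rpredN /h rpredV rpred_nat.
split; last first.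
  by rewrite /Dm mk2_add mk2_one -hh; congr mk2; ring.
case=> /=; (split; [apply: hermit_mk2; by rewrite ?Nh ?h_conj |
  rewrite mk2_mul; congr mk2; rewrite /h; by field]).
Qed.

Lemma densP a : density (Pm a).
Proof.
split; last by rewrite mk2_tr hh.
split; first by apply: hermit_mk2; rewrite h_conj.
move=> v; rewrite mk2_form /=.
set v0 := v ord0 0; set v1 := v (lift ord0 ord0) 0.
have -> : v0^* * (h * v0 + h * v1) + v1^* * (h * v0 + h * v1)
   = h * ((v0 + v1) * (v0 + v1)^*) by rewrite rmorphD; ring.
by rewrite mulr_ge0 ?h_ge0 ?mul_conjC_ge0.
Qed.

Lemma emp00_val c d : emp00 Pm Cm Dm c d = h * h.
Proof.
rewrite /emp00 big_bool /= /Pm /Cm /Dm.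
case: c; case: d; rewrite !mk2_mul !mk2_tr; rewrite /h; by field.
Qed.

Lemma emp10_val a : emp10 Pm Dm a true = 0.
Proof. by rewrite /emp10 /Pm /Dm mk2_mul mk2_tr; rewrite /h; by field. Qed.

Theorem theorem2 :
  exists (P C D B : bool -> 'M[algC]_2),
    (forall a, density (P a)) /\ projmeas C /\ projmeas D /\ projmeas B /\
    ~ (exists p : OFfamily, OpFriendliness P C D B p).
Proof.
exists Pm, Cm, Dm, Cm.
split; first exact: densP.
split; first exact: projC.
split; first exact: projD.
split; first exact: projC.
move=> [p [_ [[H00 _ H10 _] [HC _ _ HD _]]]].
have pCE x y c : pC p x y c = \sum_(d : bool) pCD p x y c d.
  by rewrite /pC /pCD !big_bool /=; ring.
have q0 c : pC p false false c = h.
  by rewrite pCE big_bool /= !H00 !emp00_val hh2.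
have q1 c : pC p true false c = h by rewrite (HC _ _ false false) q0.
have hne : h != 0.
  apply/eqP=> h0; move: hh; rewrite h0 addr0 => /eqP; by rewrite eq_sym oner_eq0.
have E c d : pCD p true false c d = h * h.
  have := HD true false false c d; rewrite q0 q1 => /(_ hne hne).
  rewrite /condD q0 q1 H00 emp00_val => Hd.
  by rewrite -(divfK hne (pCD _ _ _ _ _)) Hd divfK.
have key : \sum_(c : bool) pCD p true false c true =
           \sum_(a : bool) pAD p true false a true.
  by rewrite /pCD /pAD !big_bool /=; ring.
move: key; rewrite !big_bool /= !E !H10 !emp10_val addr0 hh2.
by move/eqP; rewrite (negbTE hne).
Qed.
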